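(* For all integers $i,N,n$ with $0\le i\le N\le n$, $$\sum_{i_1,i_2}\binom{N}{i_1}\binom{N}{i_2}\binom{i_1}{i}\binom{i_2}{i}(-1)^{i_1+i_2}\,(n-i_1)_{N-i_1}\,(n-i_2)_{N-i_2}\,(n)_{i_1+i_2-i}\;i!=N!\,(n)_N\binom{N}{i}(-1)^{N-i},$$ where the sum is over all integers $i_1,i_2$.
   Context: Convention: the binomial coefficient $\binom{k}{l}$ is defined as the usual binomial coefficient when $k\ge0$, $l\ge0$ and $k\ge l$, and is $0$ otherwise; only terms with $i\le i_1,i_2\le N$ contribute. $(m)_j=m(m-1)\cdots(m-j+1)$ denotes the falling factorial, with $(m)_0=1$. In particular, $(m)_j=0$ when $m$ is a nonnegative integer and $j>m$. *)

(* Defs.v *)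
From mathcomp Require Import all_boot all_order all_algebra.
Set Implicit Arguments. Unset Strict Implicit. Unset Printing Implicit Defensive.
(* falling factorial (m)_j is mathcomp's  m ^_ j  (binomial.v) on nat. *)

(* Main.v *)
Require Import Defs.
From mathcomp Require Import all_boot all_order all_algebra.
From mathcomp Require Import zify ring.
Import GRing.Theory.
Local Open Scope ring_scope.

Lemma ffact_split (n p q : nat) : (n ^_ (p + q) = n ^_ p * (n - p) ^_ q)%N.
Proof.
elim: q => [|q IH]; first by rewrite addn0 ffactn0 muln1.
by rewrite addnS !ffactnSr IH subnDA mulnA.
Qed.

Lemma bin_mul (N i a : nat) : ('C(N, a + i) * 'C(a + i, i) = 'C(N, i) * 'C(N - i, a))%N.
Proof.
have H : (0 < i`! * a`!)%N by rewrite muln_gt0 !fact_gt0.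
apply/eqP; rewrite -(eqn_pmul2r H); apply/eqP.
have E1 : ('C(a + i, i) * (i`! * a`!) = (a+i)`!)%N.
  by rewrite -{2}(addnK i a) bin_fact // leq_addl.
rewrite -mulnA E1 bin_ffact.
rewrite [X in _ = X](_ : _ = ('C(N, i) * i`!) * ('C(N - i, a) * a`!))%N; last by ring.
by rewrite !bin_ffact addnC ffact_split.
Qed.

Lemma pascal_sum (M : nat) (f : nat -> int) :
  \sum_(a < M.+2) ('C(M.+1, a)%:Z * (-1) ^+ a * f a) =
  \sum_(a < M.+1) ('C(M, a)%:Z * (-1) ^+ a * (f a - f a.+1)).
Proof.
rewrite big_ord_recl /=.
under eq_bigr => j _ do rewrite /bump /= add1n binS PoszD mulrDl mulrDl.
rewrite big_split /= [X in _ + (X + _)]big_ord_recr /= (bin_small (ltnSn M)) mul0r mul0r addr0.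
under [in RHS]eq_bigr => j _ do rewrite mulrBr.
rewrite sumrB [X in _ = X - _]big_ord_recl /= !bin0.
rewrite -!addrA; congr (_ + _).
congr (_ + _).
rewrite -sumrN; apply: eq_bigr => j _; rewrite exprS; ring.
Qed.

Lemma ffact_diff (y b : nat) :
  ((y.+1 ^_ b.+1)%:Z - (y ^_ b.+1)%:Z = (b.+1 * y ^_ b)%N%:Z :> int).
Proof.
rewrite ffactSS ffactnSr.
case: (ltnP y b) => h.
  by rewrite ffact_small // !(muln0, mul0n).
rewrite -[X in _ = X]subr0 ; apply/eqP; rewrite subr_eq; apply/eqP.
rewrite -PoszD; congr Posz; rewrite addn0 [(y ^_ b * _)%N]mulnC -mulnDl; congr (_ * _)%N; lia.
Qed.

Lemma Dlem M : forall b x, (b <= M)%N -> (M <= x)%N ->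
  \sum_(a < M.+1) ('C(M,a)%:Z * (-1)^+a * ((x - a) ^_ b)%:Z) =
  if b == M then (M`!)%:Z else 0.
Proof.
elim: M => [|M IH] b x hb hx.
  move: hb; rewrite leqn0 => /eqP ->.
  by rewrite big_ord1 /= bin0 subn0 ffactn0.
rewrite (pascal_sum M (fun a => ((x - a) ^_ b)%:Z)) /=.
case: b hb => [|b] hb.
  rewrite big1 // => a _; rewrite !ffactn0 subrr mulr0 //.
have -> : \sum_(a < M.+1) ('C(M, a)%:Z * (-1) ^+ a * (((x - a) ^_ b.+1)%:Z - ((x - a.+1) ^_ b.+1)%:Z))
   = (b.+1)%:Z * \sum_(a < M.+1) ('C(M, a)%:Z * (-1) ^+ a * (((x.-1 - a) ^_ b)%:Z)).
  rewrite mulr_sumr; apply: eq_bigr => a _.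
  have ha : (a <= M)%N by rewrite -ltnS.
  have -> : (x - a = (x.-1 - a).+1)%N by lia.
  have -> : (x - a.+1 = (x.-1 - a))%N by lia.
  rewrite ffact_diff PoszM; ring.
rewrite IH //; last by lia.
rewrite eqSS; case: eqP => [->|_]; last by rewrite mulr0.
by rewrite factS PoszM.
Qed.

Lemma term_nat (i N n a b : nat) : (i <= N)%N -> (N <= n)%N -> (a <= N - i)%N ->
  ('C(N, a + i) * 'C(N, b + i) * 'C(a + i, i) * 'C(b + i, i) *
   ((n - (a + i)) ^_ (N - (a + i)) * (n - (b + i)) ^_ (N - (b + i))
     * n ^_ (a + i + (b + i) - i) * i`!)
  = ('C(N, i) * 'C(N, i) * i`! * n ^_ i * (n - i) ^_ (N - i)) *
    ('C(N - i, b) * (n - i - b) ^_ (N - i - b) * ('C(N - i, a) * (n - i - a) ^_ b)))%N.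
Proof.
move=> hi hN ha.
have e1 : (n - (a + i) = n - i - a)%N by lia.
have e2 : (n - (b + i) = n - i - b)%N by lia.
have e3 : (N - (a + i) = N - i - a)%N by lia.
have e4 : (N - (b + i) = N - i - b)%N by lia.
have e5 : (a + i + (b + i) - i = i + (a + b))%N by lia.
rewrite e1 e2 e3 e4 e5 ffact_split ffact_split.
have e6 : ((n - i) ^_ a * (n - i - a) ^_ (N - i - a) = (n - i) ^_ (N - i))%N.
  by rewrite -ffact_split subnKC.
rewrite -e6.
have := bin_mul N i a; have := bin_mul N i b.
move=> E1 E2.
rewrite [X in X = _](_ : _ = ('C(N, a + i) * 'C(a + i, i)) * ('C(N, b + i) * 'C(b + i, i)) *
   ((n - i - a) ^_ (N - i - a) * (n - i - b) ^_ (N - i - b) * (n ^_ i * ((n - i) ^_ a * (n - i - a) ^_ b)) * i`!))%N; last by ring.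
rewrite E1 E2; ring.
Qed.
Lemma sign_fix (a b i : nat) : (-1) ^+ (a + i + (b + i)) = (-1) ^+ a * (-1) ^+ b :> int.
Proof.
rewrite -exprD -[LHS]signr_odd -[RHS]signr_odd; congr (_ ^+ _).
rewrite !oddD; by case: (odd a); case: (odd b); case: (odd i).
Qed.

Lemma ring_ex (c X1 X2 Y1 Y2 : nat) (s t : int) :
  Posz (c * (X1 * X2 * (Y1 * Y2)))%N * (s * t) = Posz c * (X1%:Z * s * X2%:Z * (Y1%:Z * t * Y2%:Z)).
Proof. rewrite !PoszM; ring. Qed.

Theorem mainTheorem3 (i N n : nat) (hiN : (i <= N)%N) (hNn : (N <= n)%N) :
  \sum_(i <= i1 < N.+1) \sum_(i <= i2 < N.+1)
     (('C(N, i1) * 'C(N, i2) * 'C(i1, i) * 'C(i2, i))%N%:Z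
      * (-1) ^+ (i1 + i2)
      * ((n - i1) ^_ (N - i1) * (n - i2) ^_ (N - i2)
         * n ^_ (i1 + i2 - i) * i`!)%N%:Z)
  = ((N`! * n ^_ N * 'C(N, i))%N%:Z * (-1) ^+ (N - i) :> int).
Proof.
have reidx : forall F : nat -> int,
    \sum_(i <= k < N.+1) F k = \sum_(a < (N - i).+1) F (a + i)%N.
  move=> F; rewrite -{1}[i]add0n big_addn big_mkord.
  by have -> : (N.+1 - i = (N - i).+1)%N by lia.
set M := (N - i)%N.
set c : int := ('C(N, i) * 'C(N, i) * i`! * n ^_ i * (n - i) ^_ M)%N%:Z.
rewrite reidx.
under eq_bigr => a _ do rewrite reidx.
have step : forall a b : nat, (a < M.+1)%N ->
   (('C(N, a + i) * 'C(N, b + i) * 'C(a + i, i) * 'C(b + i, i))%N%:Z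
      * (-1) ^+ (a + i + (b + i))
      * ((n - (a + i)) ^_ (N - (a + i)) * (n - (b + i)) ^_ (N - (b + i))
         * n ^_ (a + i + (b + i) - i) * i`!)%N%:Z)
   = c * (('C(M, b)%:Z * (-1) ^+ b * ((n - i - b) ^_ (M - b))%:Z) *
          ('C(M, a)%:Z * (-1) ^+ a * ((n - i - a) ^_ b)%:Z)).
  move=> a b; rewrite ltnS => ha.
  by rewrite sign_fix [((-1) ^+ a * _)]mulrC mulrAC -PoszM term_nat // ring_ex.
under eq_bigr => a _ do under eq_bigr => b _ do rewrite step //.
rewrite exchange_big /=.
have hM : (M <= n - i)%N by rewrite /M; lia.
rewrite (eq_bigr (fun b : 'I_M.+1 => c * ('C(M, b)%:Z * (-1) ^+ b * ((n - i - b) ^_ (M - b))%:Z * (if (b : nat) == M then (M`!)%:Z else 0)))); last first.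
  move=> b _; rewrite -mulr_sumr -mulr_sumr (@Dlem M b (n - i)) //.
  by rewrite -ltnS.
rewrite big_ord_recr /= big1 ?add0r; last first.
  move=> b _; rewrite (_ : (b == M :> nat) = false) ?mulr0 //.
  by apply/negbTE; rewrite neq_ltn ltn_ord.
rewrite eqxx binn subnn ffactn0 /c.
have E : ('C(N, i) * 'C(N, i) * i`! * n ^_ i * (n - i) ^_ M * M`! = N`! * n ^_ N * 'C(N, i))%N.
  have h1 : ('C(N, i) * (i`! * M`!) = N`!)%N by rewrite bin_fact.
  have h2 : (n ^_ N = n ^_ i * (n - i) ^_ M)%N by rewrite -ffact_split /M subnKC.
  rewrite h2 -h1; ring.
rewrite -E !PoszM; ring.
Qed.
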